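(* Let $(F,F_0,\tilde F,\tilde\phi)$ and $(F',F'_0,\tilde F',\tilde\phi')$ be liftings to relative right modules from $(X,I,S)$ to $(Y,J,T)$ in a 2-category $\mathcal{K}$, with corresponding relative monad morphisms $(F,F_0,\phi)$ and $(F',F'_0,\phi')$ ($\phi$, $\phi'$ being the components at $1_Y$ of $J^*_{X_0}\tilde\phi$, $J^*_{X_0}\tilde\phi'$). Then maps of liftings to relative right modules $(p,p_0,\tilde p)\colon(F,F_0,\tilde F,\tilde\phi)\Rightarrow(F',F'_0,\tilde F',\tilde\phi')$ are in bijection with relative monad transformations $(p,p_0)\colon(F,F_0,\phi)\Rightarrow(F',F'_0,\phi')$, via $(p,p_0,\tilde p)\mapsto(p,p_0)$; the inverse sets the component of $\tilde p$ at $(M,(-)_m)$ to $Mp_0\colon MF_0\Rightarrow MF'_0$.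
   Context: Conventions: 1-cells compose by juxtaposition; vertical composition of 2-cells is written $\cdot$; whiskering by juxtaposition. Relative monad: a relative monad $(X,I,S)$ in $\mathcal{K}$ consists of objects $X_0,X$, 1-cells $I,S\colon X_0\to X$, an operator $(-)^\dagger=(-)^\dagger_S\colon[I,S]\to[S,S]$ (extension: for every span $A,B\colon O\to X_0$ a function sending 2-cells $IA\Rightarrow SB$ to 2-cells $SA\Rightarrow SB$, natural in $O$, $A$ and $B$) and a 2-cell $s\colon I\Rightarrow S$ (unit) such that $k^\dagger\cdot sA=k$, $(sA)^\dagger=1_{SA}$, $(l^\dagger\cdot k)^\dagger=l^\dagger\cdot k^\dagger$ for all $k\colon IA\Rightarrow SB$, $l\colon IB\Rightarrow SC$. Relative monad morphisms and transformations: a relative monad morphism $(F,F_0,\phi)\colon(X,I,S)\to(Y,J,T)$ (with $I\colon X_0\to X$, $J\colon Y_0\to Y$, units $s,t$) consists of 1-cells $F\colon X\to Y$, $F_0\colon X_0\to Y_0$ with $FI=JF_0$ and a 2-cell $\phi\colon FS\Rightarrow TF_0$ such that $\phi\cdot Fs=tF_0$ and, for all $A,B\colon O\to X_0$ and $k\colon IA\Rightarrow SB$, $\phi B\cdot F(k^\dagger_S)=(\phi B\cdot Fk)^\dagger_T\cdot\phi A$. A relative monad transformation $(p,p_0)\colon(F,F_0,\phi)\Rightarrow(F',F'_0,\phi')$ consists of 2-cells $p\colon F\Rightarrow F'$, $p_0\colon F_0\Rightarrow F'_0$ with $Jp_0=pI$ and $\phi'\cdot pS=Tp_0\cdot\phi$.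 Relative right modules: for a relative monad $(X,I,T)$ (unit $t$, extension $(-)^\dagger$) and object $K$, a $K$-indexed relative right $T$-module is a 1-cell $M\colon X_0\to K$ with an operator $(-)_m\colon[I,T]\to[M,M]$ (so $h\colon IA\Rightarrow TB$ gives $h_m\colon MA\Rightarrow MB$, naturally in $O,A,B$) such that $(tA)_m=1_{MA}$ and $(k^\dagger\cdot h)_m=k_m\cdot h_m$ for all $h\colon IA\Rightarrow TB$, $k\colon IB\Rightarrow TC$. A morphism $(M,(-)_m)\to(N,(-)_n)$ is a 2-cell $g\colon M\Rightarrow N$ with $gB\cdot h_m=h_n\cdot gA$. These form a category $\mathrm{Mod}_T(K)$ and a 2-functor $\mathrm{Mod}_T(-)\colon\mathcal{K}\to\mathbf{Cat}$ acting by postcomposition. $J^*_{X_0}\colon\mathrm{Mod}_T(-)\to\mathcal{K}(X_0,-)$ is the forgetful 2-natural transformation; $U^*_X\colon\mathcal{K}(X,-)\to\mathrm{Mod}_T(-)$ sends $M\colon X\to K$ to $(MT,M(-)^\dagger)$; the modification $t\colon(-\circ I)\Rightarrow J^*_{X_0}U^*_X$ has components $Mt\colon MI\Rightarrow MT$. The same notation is used for any relative monad. Lifting to relative right modules: for relative monads $(X,I,S)$ ($I\colon X_0\to X$, unit $s$) and $(Y,J,T)$ ($J\colon Y_0\to Y$, unit $t$), a lifting to relative right modules from $(X,I,S)$ to $(Y,J,T)$ is a tuple $(F,F_0,\tilde F,\tilde\phi)$: 1-cells $F\colon X\to Y$, $F_0\colon X_0\to Y_0$ with $FI=JF_0$;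 a 2-natural transformation $\tilde F\colon\mathrm{Mod}_T(-)\to\mathrm{Mod}_S(-)$ with $J^*_{X_0}\tilde F=(-\circ F_0)J^*_{Y_0}$, so that $\tilde F(M,(-)_m)=(MF_0,(-)_{\tilde Fm})$; and a modification $\tilde\phi\colon U^*_X\circ(-\circ F)\Rightarrow\tilde F\circ U^*_Y$ between 2-natural transformations $\mathcal{K}(Y,-)\to\mathrm{Mod}_S(-)$; such that (1) for every $M\colon Y\to K$, $(J^*_{X_0}\tilde\phi)_M\cdot MFs=MtF_0$ as 2-cells $MJF_0=MFI\Rightarrow MTF_0$; (2) for every $(M,(-)_m)\in\mathrm{Mod}_T(K)$, all $A,B\colon O\to X_0$ and $f\colon IA\Rightarrow SB$, $f_{\tilde Fm}=(f_{\tilde FT}\cdot tF_0A)_m$, where $(-)_{\tilde FT}$ is the operator of $\tilde F(T,(-)^\dagger_T)$. Map of liftings: $(p,p_0,\tilde p)\colon(F,F_0,\tilde F,\tilde\phi)\Rightarrow(F',F'_0,\tilde F',\tilde\phi')$ consists of 2-cells $p\colon F\Rightarrow F'$, $p_0\colon F_0\Rightarrow F'_0$ with $Jp_0=pI$, and a modification $\tilde p\colon\tilde F\Rightarrow\tilde F'$ with $J^*_{X_0}\tilde p=(-\circ p_0)J^*_{Y_0}$ and $\tilde\phi'\cdot U^*_X(-\circ p)=\tilde pU^*_Y\cdot\tilde\phi$. *)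

(* Defs.v *)
(* Strict 2-categories.  1-cells compose as  g \o1 f  (f first);       *)
(* vertical composition  b \v a  (a first); whiskering whL / whR.      *)
(* The 1-cell laws are Leibniz equalities (strictness).                *)
Record PreTwoCat := {
  ob : Type;
  hom : ob -> ob -> Type;
  cell : forall A B : ob, hom A B -> hom A B -> Type;
  id1 : forall A : ob, hom A A;
  comp1 : forall A B C : ob, hom B C -> hom A B -> hom A C;
  id2 : forall A B (f : hom A B), cell A B f f;
  vcomp : forall A B (f g h : hom A B), cell A B g h -> cell A B f g -> cell A B f h;
  whL : forall A B C (h : hom B C) (f g : hom A B),
      cell A B f g -> cell A C (comp1 A B C h f) (comp1 A B C h g);
  whR : forall A B C (f g : hom B C), cell B C f g ->
      forall k : hom A B, cell A C (comp1 A B C f k) (comp1 A B C g k);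
  comp1A : forall A B C D (h : hom C D) (g : hom B C) (f : hom A B),
      comp1 A B D (comp1 B C D h g) f = comp1 A C D h (comp1 A B C g f);
  comp1_idl : forall A B (f : hom A B), comp1 A B B (id1 B) f = f;
  comp1_idr : forall A B (f : hom A B), comp1 A A B f (id1 A) = f }.

Arguments hom {_} _ _.
Arguments cell {_ A B} _ _.
Arguments id1 {_} _.
Arguments comp1 {_ A B C} _ _.
Arguments id2 {_ A B} _.
Arguments vcomp {_ A B f g h} _ _.
Arguments whL {_ A B C} h {f g} _.
Arguments whR {_ A B C f g} _ k.
Arguments comp1A {_ A B C D} h g f.
Arguments comp1_idl {_ A B} f.
Arguments comp1_idr {_ A B} f.

Notation "g \o1 f" := (comp1 g f) (at level 40, left associativity).
Notation "b \v a" := (vcomp b a) (at level 50, left associativity).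

Definition eqc {C : PreTwoCat} {A B : ob C} {f g : hom A B} (e : f = g) : cell f g :=
  match e in _ = y return cell f y with eq_refl => id2 f end.

Record is_two_cat (C : PreTwoCat) : Prop := {
  vA : forall (A B : ob C) (f g h k : hom A B) (c : cell h k) (b : cell g h) (a : cell f g),
      (c \v b) \v a = c \v (b \v a);
  vidl : forall (A B : ob C) (f g : hom A B) (a : cell f g), id2 g \v a = a;
  vidr : forall (A B : ob C) (f g : hom A B) (a : cell f g), a \v id2 f = a;
  whL_id : forall (A B D : ob C) (h : hom B D) (f : hom A B), whL h (id2 f) = id2 (h \o1 f);
  whL_v : forall (A B D : ob C) (h : hom B D) (f g k : hom A B) (b : cell g k) (a : cell f g),
      whL h (b \v a) = whL h b \v whL h a;
  whR_id : forall (A B D : ob C) (f : hom B D) (k : hom A B), whR (id2 f) k = id2 (f \o1 k);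
  whR_v : forall (A B D : ob C) (f g h : hom B D) (b : cell g h) (a : cell f g) (k : hom A B),
      whR (b \v a) k = whR b k \v whR a k;
  whL_id1 : forall (A B : ob C) (f g : hom A B) (a : cell f g),
      eqc (comp1_idl g) \v whL (id1 B) a = a \v eqc (comp1_idl f);
  whL_comp : forall (A B D E : ob C) (h : hom D E) (h' : hom B D) (f g : hom A B) (a : cell f g),
      eqc (comp1A h h' g) \v whL (h \o1 h') a = whL h (whL h' a) \v eqc (comp1A h h' f);
  whR_id1 : forall (A B : ob C) (f g : hom A B) (a : cell f g),
      eqc (comp1_idr g) \v whR a (id1 A) = a \v eqc (comp1_idr f);
  whR_comp : forall (A B D E : ob C) (f g : hom D E) (a : cell f g) (k : hom B D) (k' : hom A B),
      eqc (comp1A g k k') \v whR (whR a k) k' = whR a (k \o1 k') \v eqc (comp1A f k k');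
  whLR : forall (A B D E : ob C) (h : hom D E) (f g : hom B D) (a : cell f g) (k : hom A B),
      eqc (comp1A h g k) \v whR (whL h a) k = whL h (whR a k) \v eqc (comp1A h f k);
  interchange : forall (A B D : ob C) (f f' : hom A B) (g g' : hom B D)
      (a : cell f f') (b : cell g g'),
      whR b f' \v whL g a = whL g' a \v whR b f }.

Record RelMonad {C : PreTwoCat} (X0 X : ob C) (I : hom X0 X) := {
  rmS : hom X0 X;
  rmext : forall (O : ob C) (A B : hom O X0),
      cell (I \o1 A) (rmS \o1 B) -> cell (rmS \o1 A) (rmS \o1 B);
  rmunit : cell I rmS }.

Arguments rmS {C X0 X I} _.
Arguments rmext {C X0 X I} _ {O A B} _.
Arguments rmunit {C X0 X I} _.

Record is_rel_monad {C : PreTwoCat} (X0 X : ob C) (I : hom X0 X) (S : RelMonad X0 X I) : Prop := {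
  rm_natO : forall (O O' : ob C) (Z : hom O' O) (A B : hom O X0)
      (k : cell (I \o1 A) (rmS S \o1 B)),
      rmext S (eqc (comp1A (rmS S) B Z) \v whR k Z \v eqc (eq_sym (comp1A I A Z)))
      = eqc (comp1A (rmS S) B Z) \v whR (rmext S k) Z \v eqc (eq_sym (comp1A (rmS S) A Z));
  rm_natA : forall (O : ob C) (A A' B : hom O X0) (a : cell A' A)
      (k : cell (I \o1 A) (rmS S \o1 B)),
      rmext S (k \v whL I a) = rmext S k \v whL (rmS S) a;
  rm_natB : forall (O : ob C) (A B B' : hom O X0) (b : cell B B')
      (k : cell (I \o1 A) (rmS S \o1 B)),
      rmext S (whL (rmS S) b \v k) = whL (rmS S) b \v rmext S k;
  rm_unitl : forall (O : ob C) (A B : hom O X0) (k : cell (I \o1 A) (rmS S \o1 B)),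
      rmext S k \v whR (rmunit S) A = k;
  rm_unitr : forall (O : ob C) (A : hom O X0),
      rmext S (whR (rmunit S) A) = id2 (rmS S \o1 A);
  rm_assoc : forall (O : ob C) (A B D : hom O X0)
      (k : cell (I \o1 A) (rmS S \o1 B)) (l : cell (I \o1 B) (rmS S \o1 D)),
      rmext S (rmext S l \v k) = rmext S l \v rmext S k }.

Arguments is_rel_monad {C X0 X I} S.

Record RMod {C : PreTwoCat} (X0 X : ob C) (I T : hom X0 X) (K : ob C) := {
  mdM : hom X0 K;
  mdop : forall (O : ob C) (A B : hom O X0),
      cell (I \o1 A) (T \o1 B) -> cell (mdM \o1 A) (mdM \o1 B) }.

Arguments mdM {C X0 X I T K} _.
Arguments mdop {C X0 X I T K} _ {O A B} _.

Record is_module {C : PreTwoCat} (X0 X : ob C) (I : hom X0 X) (T : RelMonad X0 X I)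
    (K : ob C) (N : RMod X0 X I (rmS T) K) : Prop := {
  md_natO : forall (O O' : ob C) (Z : hom O' O) (A B : hom O X0)
      (h : cell (I \o1 A) (rmS T \o1 B)),
      mdop N (eqc (comp1A (rmS T) B Z) \v whR h Z \v eqc (eq_sym (comp1A I A Z)))
      = eqc (comp1A (mdM N) B Z) \v whR (mdop N h) Z \v eqc (eq_sym (comp1A (mdM N) A Z));
  md_natA : forall (O : ob C) (A A' B : hom O X0) (a : cell A' A)
      (h : cell (I \o1 A) (rmS T \o1 B)),
      mdop N (h \v whL I a) = mdop N h \v whL (mdM N) a;
  md_natB : forall (O : ob C) (A B B' : hom O X0) (b : cell B B')
      (h : cell (I \o1 A) (rmS T \o1 B)),
      mdop N (whL (rmS T) b \v h) = whL (mdM N) b \v mdop N h;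
  md_unit : forall (O : ob C) (A : hom O X0),
      mdop N (whR (rmunit T) A) = id2 (mdM N \o1 A);
  md_comp : forall (O : ob C) (A B D : hom O X0)
      (h : cell (I \o1 A) (rmS T \o1 B)) (k : cell (I \o1 B) (rmS T \o1 D)),
      mdop N (rmext T k \v h) = mdop N k \v mdop N h }.

Arguments is_module {C X0 X I} T {K} N.

Definition is_mod_hom {C : PreTwoCat} {X0 X : ob C} {I T : hom X0 X} {K : ob C}
    (N N' : RMod X0 X I T K) (g : cell (mdM N) (mdM N')) : Prop :=
  forall (O : ob C) (A B : hom O X0) (h : cell (I \o1 A) (T \o1 B)),
    whR g B \v mdop N h = mdop N' h \v whR g A.

(* action of Mod_T(-) on a 1-cell H : K -> K' (postcomposition) *)
Definition post {C : PreTwoCat} {X0 X : ob C} {I T : hom X0 X} {K K' : ob C}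
    (H : hom K K') (N : RMod X0 X I T K) : RMod X0 X I T K' :=
  {| mdM := H \o1 mdM N;
     mdop := fun O A B h =>
       eqc (eq_sym (comp1A H (mdM N) B)) \v whL H (mdop N h) \v eqc (comp1A H (mdM N) A) |}.

Definition Ustar {C : PreTwoCat} {X0 X : ob C} {I : hom X0 X} (S : RelMonad X0 X I)
    {K : ob C} (M : hom X K) : RMod X0 X I (rmS S) K :=
  {| mdM := M \o1 rmS S;
     mdop := fun O A B h =>
       eqc (eq_sym (comp1A M (rmS S) B)) \v whL M (rmext S h) \v eqc (comp1A M (rmS S) A) |}.

Definition Tmod {C : PreTwoCat} {Y0 Y : ob C} {J : hom Y0 Y} (T : RelMonad Y0 Y J)
    : RMod Y0 Y J (rmS T) Y :=
  {| mdM := rmS T; mdop := fun O A B h => rmext T h |}.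

(* The 2-natural transformation Ftilde is given, as J^*Ftilde =        *)
(* (- o F0) J^* forces, by its operators: Ftilde(M,m) = (M F0, lFt N). *)
(* The modification phitilde is given by its components                *)
(* lphi M : (M F) S => (M T) F0.                                       *)
Record Lifting {C : PreTwoCat} (X0 X Y0 Y : ob C) (I : hom X0 X) (J : hom Y0 Y)
    (S : RelMonad X0 X I) (T : RelMonad Y0 Y J) := {
  lF : hom X Y;
  lF0 : hom X0 Y0;
  lFI : lF \o1 I = J \o1 lF0;
  lFt : forall (K : ob C) (N : RMod Y0 Y J (rmS T) K) (O : ob C) (A B : hom O X0),
      cell (I \o1 A) (rmS S \o1 B) -> cell ((mdM N \o1 lF0) \o1 A) ((mdM N \o1 lF0) \o1 B);
  lphi : forall (K : ob C) (M : hom Y K), cell ((M \o1 lF) \o1 rmS S) ((M \o1 rmS T) \o1 lF0) }.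

Arguments lF {C X0 X Y0 Y I J S T} _.
Arguments lF0 {C X0 X Y0 Y I J S T} _.
Arguments lFI {C X0 X Y0 Y I J S T} _.
Arguments lFt {C X0 X Y0 Y I J S T} _ {K} N {O A B} _.
Arguments lphi {C X0 X Y0 Y I J S T} _ {K} M.

Section LiftingDefs.
Context {C : PreTwoCat} {X0 X Y0 Y : ob C} {I : hom X0 X} {J : hom Y0 Y}
  {S : RelMonad X0 X I} {T : RelMonad Y0 Y J}.

Definition liftobj (L : Lifting X0 X Y0 Y I J S T) {K : ob C} (N : RMod Y0 Y J (rmS T) K)
    : RMod X0 X I (rmS S) K :=
  {| mdM := mdM N \o1 lF0 L; mdop := fun O A B f => lFt L N f |}.

Definition eq_src (L : Lifting X0 X Y0 Y I J S T) {K K' : ob C} (H : hom K K') (M : hom Y K)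
    : ((H \o1 M) \o1 lF L) \o1 rmS S = H \o1 ((M \o1 lF L) \o1 rmS S) :=
  eq_trans (comp1A (H \o1 M) (lF L) (rmS S))
    (eq_trans (comp1A H M (lF L \o1 rmS S))
       (eq_sym (f_equal (fun x => H \o1 x) (comp1A M (lF L) (rmS S))))).

Definition eq_tgt (L : Lifting X0 X Y0 Y I J S T) {K K' : ob C} (H : hom K K') (M : hom Y K)
    : ((H \o1 M) \o1 rmS T) \o1 lF0 L = H \o1 ((M \o1 rmS T) \o1 lF0 L) :=
  eq_trans (comp1A (H \o1 M) (rmS T) (lF0 L))
    (eq_trans (comp1A H M (rmS T \o1 lF0 L))
       (eq_sym (f_equal (fun x => H \o1 x) (comp1A M (rmS T) (lF0 L))))).

Definition eq_MFI (L : Lifting X0 X Y0 Y I J S T) {K : ob C} (M : hom Y K)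
    : (M \o1 lF L) \o1 I = (M \o1 J) \o1 lF0 L :=
  eq_trans (comp1A M (lF L) I)
    (eq_trans (f_equal (fun x => M \o1 x) (lFI L)) (eq_sym (comp1A M J (lF0 L)))).

Record is_lifting (L : Lifting X0 X Y0 Y I J S T) : Prop := {
  lf_mod : forall (K : ob C) (N : RMod Y0 Y J (rmS T) K),
      is_module T N -> is_module S (liftobj L N);
  lf_hom : forall (K : ob C) (N N' : RMod Y0 Y J (rmS T) K) (g : cell (mdM N) (mdM N')),
      is_module T N -> is_module T N' -> is_mod_hom N N' g ->
      is_mod_hom (liftobj L N) (liftobj L N') (whR g (lF0 L));
  lf_nat1 : forall (K K' : ob C) (H : hom K K') (N : RMod Y0 Y J (rmS T) K),
      is_module T N ->
      forall (O : ob C) (A B : hom O X0) (f : cell (I \o1 A) (rmS S \o1 B)),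
      whR (eqc (comp1A H (mdM N) (lF0 L))) B \v mdop (liftobj L (post H N)) f
      = mdop (post H (liftobj L N)) f \v whR (eqc (comp1A H (mdM N) (lF0 L))) A;
  lf_nat2 : forall (K K' : ob C) (H H' : hom K K') (th : cell H H')
      (N : RMod Y0 Y J (rmS T) K), is_module T N ->
      eqc (comp1A H' (mdM N) (lF0 L)) \v whR (whR th (mdM N)) (lF0 L)
      = whR th (mdM N \o1 lF0 L) \v eqc (comp1A H (mdM N) (lF0 L));
  lf_phihom : forall (K : ob C) (M : hom Y K),
      is_mod_hom (Ustar S (M \o1 lF L)) (liftobj L (Ustar T M)) (lphi L M);
  lf_phinat : forall (K : ob C) (M M' : hom Y K) (th : cell M M'),
      lphi L M' \v whR (whR th (lF L)) (rmS S) = whR (whR th (rmS T)) (lF0 L) \v lphi L M;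
  lf_phimod : forall (K K' : ob C) (H : hom K K') (M : hom Y K),
      eqc (eq_tgt L H M) \v lphi L (H \o1 M) = whL H (lphi L M) \v eqc (eq_src L H M);
  lf_unit : forall (K : ob C) (M : hom Y K),
      lphi L M \v whL (M \o1 lF L) (rmunit S)
      = whR (whL M (rmunit T)) (lF0 L) \v eqc (eq_MFI L M);
  lf_ext : forall (K : ob C) (N : RMod Y0 Y J (rmS T) K), is_module T N ->
      forall (O : ob C) (A B : hom O X0) (f : cell (I \o1 A) (rmS S \o1 B)),
      eqc (comp1A (mdM N) (lF0 L) B) \v lFt L N f
      = mdop N (eqc (comp1A (rmS T) (lF0 L) B)
                 \v (lFt L (Tmod T) f \v whR (whR (rmunit T) (lF0 L)) A)
                 \v eqc (eq_sym (comp1A J (lF0 L) A)))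
        \v eqc (comp1A (mdM N) (lF0 L) A) }.

(* the relative monad morphism (F, F0, phi) of a lifting:
   phi = component at 1_Y of J^* phitilde, a 2-cell (1 F) S => (1 T) F0 = F S => T F0 *)
Definition lphi0 (L : Lifting X0 X Y0 Y I J S T) : cell (lF L \o1 rmS S) (rmS T \o1 lF0 L) :=
  eqc (f_equal (fun x => x \o1 lF0 L) (comp1_idl (rmS T)))
  \v lphi L (id1 Y)
  \v eqc (f_equal (fun x => x \o1 rmS S) (eq_sym (comp1_idl (lF L)))).

Definition is_rel_monad_trans (F F' : hom X Y) (F0 F0' : hom X0 Y0)
    (e : F \o1 I = J \o1 F0) (e' : F' \o1 I = J \o1 F0')
    (phi : cell (F \o1 rmS S) (rmS T \o1 F0)) (phi' : cell (F' \o1 rmS S) (rmS T \o1 F0'))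
    (p : cell F F') (p0 : cell F0 F0') : Prop :=
  whL J p0 \v eqc e = eqc e' \v whR p I
  /\ phi' \v whR p (rmS S) = whL (rmS T) p0 \v phi.

(* maps of liftings (p, p0, ptilde); ptilde is given by its components
   (indexed by all K and all candidate modules N; J^*ptilde = (- o p0)J^*
   pins them down to M p0) *)
Record is_lifting_map (L L' : Lifting X0 X Y0 Y I J S T)
    (p : cell (lF L) (lF L')) (p0 : cell (lF0 L) (lF0 L'))
    (tp : forall (K : ob C) (N : RMod Y0 Y J (rmS T) K),
        cell (mdM N \o1 lF0 L) (mdM N \o1 lF0 L')) : Prop := {
  lm_Jp : whL J p0 \v eqc (lFI L) = eqc (lFI L') \v whR p I;
  lm_tpJ : forall (K : ob C) (N : RMod Y0 Y J (rmS T) K), tp K N = whL (mdM N) p0;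
  lm_tphom : forall (K : ob C) (N : RMod Y0 Y J (rmS T) K), is_module T N ->
      is_mod_hom (liftobj L N) (liftobj L' N) (tp K N);
  lm_tpnat : forall (K : ob C) (N N' : RMod Y0 Y J (rmS T) K) (g : cell (mdM N) (mdM N')),
      is_module T N -> is_module T N' -> is_mod_hom N N' g ->
      tp K N' \v whR g (lF0 L) = whR g (lF0 L') \v tp K N;
  lm_tpmod : forall (K K' : ob C) (H : hom K K') (N : RMod Y0 Y J (rmS T) K),
      is_module T N ->
      eqc (comp1A H (mdM N) (lF0 L')) \v tp K' (post H N)
      = whL H (tp K N) \v eqc (comp1A H (mdM N) (lF0 L));
  lm_phi : forall (K : ob C) (M : hom Y K),
      lphi L' M \v whR (whL M p) (rmS S) = tp K (Ustar T M) \v lphi L M }.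

End LiftingDefs.

Arguments is_rel_monad_trans {C X0 X Y0 Y I J S T F F' F0 F0'} e e' phi phi' p p0.

(* Main.v *)
Require Import Defs.
From Stdlib Require Import Eqdep FunctionalExtensionality.

Section PK.
Context {C : PreTwoCat} (HC : is_two_cat C).

Definition pk {A B : ob C} {f g : hom A B} (a : cell f g)
  : {fg : hom A B * hom A B & cell (fst fg) (snd fg)} :=
  existT (fun fg => cell (fst fg) (snd fg)) (f, g) a.

Lemma pk_inj {A B : ob C} {f g : hom A B} (a b : cell f g) : pk a = pk b -> a = b.
Proof. intro H. exact (inj_pair2 _ (fun fg => cell (fst fg) (snd fg)) (f, g) a b H). Qed.

Lemma pk_elim {A B : ob C} {f g f' g' : hom A B} (a : cell f g) (a' : cell f' g') :
  pk a = pk a' -> f = f' /\ g = g'.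
Proof. intro H. apply (f_equal (@projT1 _ _)) in H. simpl in H. injection H. auto. Qed.

Lemma pk_vcong {A B : ob C} {f g h f' g' h' : hom A B} (a : cell f g) (b : cell g h)
  (a' : cell f' g') (b' : cell g' h') : pk a = pk a' -> pk b = pk b' -> pk (b \v a) = pk (b' \v a').
Proof.
  intros H1 H2. destruct (pk_elim _ _ H1) as [E1 E2]. destruct (pk_elim _ _ H2) as [E3 E4].
  subst. apply pk_inj in H1. apply pk_inj in H2. subst. reflexivity.
Qed.

Lemma pk_whL {A B D : ob C} (h : hom B D) {f g f' g' : hom A B} (a : cell f g) (a' : cell f' g') :
  pk a = pk a' -> pk (whL h a) = pk (whL h a').
Proof.
  intros H1. destruct (pk_elim _ _ H1) as [E1 E2]. subst. apply pk_inj in H1. subst. reflexivity.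
Qed.

Lemma pk_whR {A B D : ob C} {f g f' g' : hom B D} (a : cell f g) (a' : cell f' g') (k : hom A B) :
  pk a = pk a' -> pk (whR a k) = pk (whR a' k).
Proof.
  intros H1. destruct (pk_elim _ _ H1) as [E1 E2]. subst. apply pk_inj in H1. subst. reflexivity.
Qed.

Lemma pk_of {A B : ob C} {f g f' g' : hom A B} (e1 : f = f') (e2 : g = g') (x : cell f g) (y : cell f' g') :
  eqc e2 \v x = y \v eqc e1 -> pk x = pk y.
Proof.
  destruct e1, e2. simpl. rewrite (vidl _ HC), (vidr _ HC). intros ->. reflexivity.
Qed.

Lemma pk_eqcl {A B : ob C} {f g g' : hom A B} (e : g = g') (x : cell f g) : pk (eqc e \v x) = pk x.
Proof. destruct e. simpl. rewrite (vidl _ HC). reflexivity. Qed.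

Lemma pk_eqcr {A B : ob C} {f f' g : hom A B} (e : f' = f) (x : cell f g) : pk (x \v eqc e) = pk x.
Proof. destruct e. simpl. rewrite (vidr _ HC). reflexivity. Qed.

Lemma pk_eqc {A B : ob C} {f g : hom A B} (e : f = g) : pk (eqc e) = pk (id2 f).
Proof. destruct e. reflexivity. Qed.

Lemma pk_whL_eqc {A B D : ob C} (h : hom B D) {f g : hom A B} (e : f = g) :
  pk (whL h (eqc e)) = pk (id2 (h \o1 f)).
Proof. destruct e. simpl. rewrite (whL_id _ HC). reflexivity. Qed.

Lemma pk_whR_eqc {A B D : ob C} {f g : hom B D} (e : f = g) (k : hom A B) :
  pk (whR (eqc e) k) = pk (id2 (f \o1 k)).
Proof. destruct e. simpl. rewrite (whR_id _ HC). reflexivity. Qed.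

Lemma pk_whL1 {A B : ob C} {f g : hom A B} (a : cell f g) : pk (whL (id1 B) a) = pk a.
Proof. apply (pk_of _ _ _ _ (whL_id1 _ HC _ _ _ _ a)). Qed.

Lemma pk_whLc {A B D E : ob C} (h : hom D E) (h' : hom B D) {f g : hom A B} (a : cell f g) :
  pk (whL (h \o1 h') a) = pk (whL h (whL h' a)).
Proof. apply (pk_of _ _ _ _ (whL_comp _ HC _ _ _ _ h h' _ _ a)). Qed.

Lemma pk_whRc {A B D E : ob C} {f g : hom D E} (a : cell f g) (k : hom B D) (k' : hom A B) :
  pk (whR (whR a k) k') = pk (whR a (k \o1 k')).
Proof. apply (pk_of _ _ _ _ (whR_comp _ HC _ _ _ _ _ _ a k k')). Qed.

Lemma pk_whLR {A B D E : ob C} (h : hom D E) {f g : hom B D} (a : cell f g) (k : hom A B) :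
  pk (whR (whL h a) k) = pk (whL h (whR a k)).
Proof. apply (pk_of _ _ _ _ (whLR _ HC _ _ _ _ h _ _ a k)). Qed.

End PK.

Section PK2.
Context {C : PreTwoCat} (HC : is_two_cat C).

Lemma pk_id2 {A B : ob C} {f g : hom A B} (e : f = g) : pk (id2 f) = pk (id2 g).
Proof. destruct e. reflexivity. Qed.

Lemma pk_idl {A B : ob C} {f g : hom A B} (x : cell f g) : pk (id2 g \v x) = pk x.
Proof. rewrite (vidl _ HC). reflexivity. Qed.
Lemma pk_idr {A B : ob C} {f g : hom A B} (x : cell f g) : pk (x \v id2 f) = pk x.
Proof. rewrite (vidr _ HC). reflexivity. Qed.

Lemma pk_whLeqcl {A B D : ob C} (h : hom B D) {g g' : hom A B} {f : hom A D} (e : g = g') (x : cell f (h \o1 g)) :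
  pk (whL h (eqc e) \v x) = pk x.
Proof. destruct e. simpl. rewrite (whL_id _ HC), (vidl _ HC). reflexivity. Qed.
Lemma pk_whLeqcr {A B D : ob C} (h : hom B D) {f f' : hom A B} {g : hom A D} (e : f' = f) (x : cell (h \o1 f) g) :
  pk (x \v whL h (eqc e)) = pk x.
Proof. destruct e. simpl. rewrite (whL_id _ HC), (vidr _ HC). reflexivity. Qed.
Lemma pk_whReqcl {A B D : ob C} {g g' : hom B D} {f : hom A D} (e : g = g') (k : hom A B) (x : cell f (g \o1 k)) :
  pk (whR (eqc e) k \v x) = pk x.
Proof. destruct e. simpl. rewrite (whR_id _ HC), (vidl _ HC). reflexivity. Qed.
Lemma pk_whReqcr {A B D : ob C} {f f' : hom B D} {g : hom A D} (e : f' = f) (k : hom A B) (x : cell (f \o1 k) g) :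
  pk (x \v whR (eqc e) k) = pk x.
Proof. destruct e. simpl. rewrite (whR_id _ HC), (vidr _ HC). reflexivity. Qed.
End PK2.

Ltac pkclean HC :=
  repeat first [ rewrite (pk_eqcl HC) | rewrite (pk_eqcr HC) | rewrite (pk_idl HC)
               | rewrite (pk_idr HC) | rewrite (pk_whLeqcl HC) | rewrite (pk_whLeqcr HC)
               | rewrite (pk_whReqcl HC) | rewrite (pk_whReqcr HC) ].

Section PK3.
Context {C : PreTwoCat} (HC : is_two_cat C).
Lemma whR_eqc {A B D : ob C} {f g : hom B D} (e : f = g) (k : hom A B) :
  whR (eqc e) k = eqc (f_equal (fun x => x \o1 k) e).
Proof. destruct e. simpl. apply (whR_id _ HC). Qed.
Lemma whL_eqc {A B D : ob C} (h : hom B D) {f g : hom A B} (e : f = g) :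
  whL h (eqc e) = eqc (f_equal (fun x => h \o1 x) e).
Proof. destruct e. simpl. apply (whL_id _ HC). Qed.
End PK3.

Section M.
Context (C : PreTwoCat) (HC : is_two_cat C) (Y0 Y : ob C) (J : hom Y0 Y)
   (T : RelMonad Y0 Y J) (HT : is_rel_monad T).

Lemma modT : is_module T (Tmod T).
Proof. destruct HT; constructor; simpl; auto. Qed.

Lemma modU (K : ob C) (M : hom Y K) : is_module T (Ustar T M).
Proof.
  constructor; simpl; intros.
  - apply pk_inj. rewrite (rm_natO _ _ _ _ HT). pkclean HC.
    rewrite !(whL_v _ HC). pkclean HC.
    rewrite !(whR_v _ HC). pkclean HC. symmetry. apply (pk_whLR HC).
  - apply pk_inj. rewrite (rm_natA _ _ _ _ HT), (whL_v _ HC).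
    rewrite !(vA _ HC). pkclean HC. apply pk_vcong; [pkclean HC; symmetry; apply (pk_whLc HC) | reflexivity].
  - apply pk_inj. rewrite (rm_natB _ _ _ _ HT), (whL_v _ HC).
    rewrite !(vA _ HC). pkclean HC. apply pk_vcong; [ | pkclean HC; symmetry; apply (pk_whLc HC)].
    pkclean HC. reflexivity.
  - apply pk_inj. rewrite (rm_unitr _ _ _ _ HT), (whL_id _ HC). pkclean HC. apply pk_id2, eq_sym, comp1A.
  - apply pk_inj. rewrite (rm_assoc _ _ _ _ HT), (whL_v _ HC).
    rewrite !(vA _ HC). rewrite !(pk_eqcl HC). apply pk_vcong; [ | reflexivity].
    rewrite !(pk_eqcl HC). reflexivity.
Qed.

Lemma homUT : is_mod_hom (Ustar T (id1 Y)) (Tmod T) (eqc (comp1_idl (rmS T))).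
Proof.
  unfold is_mod_hom; intros; simpl. apply pk_inj.
  rewrite (pk_whReqcl HC), (pk_whReqcr HC), (pk_eqcr HC), (pk_eqcl HC). apply (pk_whL1 HC).
Qed.
End M.

Section Phi.
Context (C : PreTwoCat) (HC : is_two_cat C)
    (X0 X Y0 Y : ob C) (I : hom X0 X) (J : hom Y0 Y)
    (S : RelMonad X0 X I) (T : RelMonad Y0 Y J)
    (HS : is_rel_monad S) (HT : is_rel_monad T).

Lemma Phi (L : Lifting X0 X Y0 Y I J S T) (HL : is_lifting L) (O : ob C) (A B : hom O X0)
  (f : cell (I \o1 A) (rmS S \o1 B)) :
  pk (lFt L (Tmod T) f \v whR (whR (rmunit T) (lF0 L)) A) = pk (whR (lphi0 L) B \v eqc (eq_sym (comp1A (lF L) (rmS S) B)) \v whL (lF L) f).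
Proof.
  pose proof (lf_hom L HL Y (Ustar T (id1 Y)) (Tmod T) (eqc (comp1_idl (rmS T)))
     (modU _ HC _ _ _ _ HT _ _) (modT _ _ _ _ _ HT) (homUT _ HC _ _ _ _) O A B f) as H1.
  simpl in H1.
  pose proof (lf_phihom L HL Y (id1 Y) O A B f) as H2. simpl in H2.
  pose proof (lf_unit L HL Y (id1 Y)) as H3.
  assert (H4 : lFt L (Ustar T (id1 Y)) f \v whR (whR (whL (id1 Y) (rmunit T)) (lF0 L)) A
     \v whR (eqc (eq_MFI L (id1 Y))) A
     = whR (lphi L (id1 Y)) B \v mdop (Ustar S (id1 Y \o1 lF L)) f \v whR (whL (id1 Y \o1 lF L) (rmunit S)) A).
  { rewrite (vA _ HC), <- (whR_v _ HC), <- H3, (whR_v _ HC), <- (vA _ HC). simpl. rewrite <- H2. reflexivity. }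
  transitivity (pk (lFt L (Ustar T (id1 Y)) f \v whR (whR (whL (id1 Y) (rmunit T)) (lF0 L)) A)).
  { apply pk_vcong.
    - apply pk_whR, pk_whR. symmetry. apply (pk_whL1 HC).
    - rewrite !(whR_eqc HC) in H1. symmetry. apply (pk_of HC _ _ _ _ H1). }
  rewrite <- (pk_whReqcr HC (eq_MFI L (id1 Y))), H4.
  rewrite !(vA _ HC). apply pk_vcong.
  - simpl. rewrite !(vA _ HC). rewrite !(pk_eqcl HC).
    transitivity (pk (whL (id1 Y \o1 lF L) (rmext S f) \v whL (id1 Y \o1 lF L) (whR (rmunit S) A))).
    + apply pk_vcong; [ | reflexivity]. rewrite (pk_eqcl HC). apply (pk_whLR HC).
    + rewrite <- (whL_v _ HC), (rm_unitl _ _ _ _ HS). rewrite (pk_whLc HC). apply (pk_whL1 HC).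
  - apply pk_whR. unfold lphi0. rewrite (pk_eqcr HC), (pk_eqcl HC). reflexivity.
Qed.
End Phi.


Section Main.
Context (C : PreTwoCat) (HC : is_two_cat C)
    (X0 X Y0 Y : ob C) (I : hom X0 X) (J : hom Y0 Y)
    (S : RelMonad X0 X I) (T : RelMonad Y0 Y J)
    (HS : is_rel_monad S) (HT : is_rel_monad T).

Lemma pk_lphi0 (L : Lifting X0 X Y0 Y I J S T) : pk (lphi0 L) = pk (lphi L (id1 Y)).
Proof. unfold lphi0. rewrite (pk_eqcr HC), (pk_eqcl HC). reflexivity. Qed.

Lemma lemA (L L' : Lifting X0 X Y0 Y I J S T) (p : cell (lF L) (lF L')) :
  pk (lphi0 L' \v whR p (rmS S)) = pk (lphi L' (id1 Y) \v whR (whL (id1 Y) p) (rmS S)).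
Proof. apply pk_vcong. - apply pk_whR. symmetry. apply (pk_whL1 HC). - apply pk_lphi0. Qed.

Lemma lemB (L L' : Lifting X0 X Y0 Y I J S T) (p0 : cell (lF0 L) (lF0 L')) :
  pk (whL (rmS T) p0 \v lphi0 L) = pk (whL (id1 Y \o1 rmS T) p0 \v lphi L (id1 Y)).
Proof. apply pk_vcong. - apply pk_lphi0. - rewrite (pk_whLc HC), (pk_whL1 HC). reflexivity. Qed.

Lemma pk_lphiM (L : Lifting X0 X Y0 Y I J S T) (HL : is_lifting L) (K : ob C) (M : hom Y K) :
  pk (lphi L M) = pk (whL M (lphi L (id1 Y))).
Proof.
  assert (E : forall M' (e : M' = M), pk (lphi L M') = pk (lphi L M)) by (intros; subst; reflexivity).
  rewrite <- (E _ (comp1_idr M)).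
  apply (pk_of HC _ _ _ _ (lf_phimod _ HL _ _ M (id1 Y))).
Qed.


Lemma tphom (L L' : Lifting X0 X Y0 Y I J S T) (HL : is_lifting L) (HL' : is_lifting L')
  (p : cell (lF L) (lF L')) (p0 : cell (lF0 L) (lF0 L'))
  (Hjp : whL J p0 \v eqc (lFI L) = eqc (lFI L') \v whR p I)
  (Hph : lphi0 L' \v whR p (rmS S) = whL (rmS T) p0 \v lphi0 L)
  (K : ob C) (N : RMod Y0 Y J (rmS T) K) (HN : is_module T N) :
  is_mod_hom (liftobj L N) (liftobj L' N) (whL (mdM N) p0).
Proof.
  intros O A B h. simpl.
  pose proof (lf_ext L HL K N HN O A B h) as E.
  pose proof (lf_ext L' HL' K N HN O A B h) as E'.
  apply pk_inj.
  transitivity (pk (whL (mdM N) (whR p0 B) \v mdop N (eqc (comp1A (rmS T) (lF0 L) B)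
                 \v (lFt L (Tmod T) h \v whR (whR (rmunit T) (lF0 L)) A)
                 \v eqc (eq_sym (comp1A J (lF0 L) A))))).
  { apply pk_vcong. - apply (pk_of HC _ _ _ _ E). - apply (pk_whLR HC). }
  rewrite <- (md_natB _ _ _ _ _ _ HN).
  transitivity (pk (mdop N (eqc (comp1A (rmS T) (lF0 L') B)
                 \v (lFt L' (Tmod T) h \v whR (whR (rmunit T) (lF0 L')) A)
                 \v eqc (eq_sym (comp1A J (lF0 L') A))) \v whL (mdM N) (whR p0 A))).
  2:{ apply pk_vcong. - symmetry. apply (pk_whLR HC). - symmetry. apply (pk_of HC _ _ _ _ E'). }
  rewrite <- (md_natA _ _ _ _ _ _ HN).
  apply (f_equal (fun z => pk (mdop N z))). apply pk_inj.
  transitivity (pk (whR (whL (rmS T) p0) B \v (lFt L (Tmod T) h \v whR (whR (rmunit T) (lF0 L)) A))).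
  { apply pk_vcong. - rewrite (pk_eqcr HC), (pk_eqcl HC). reflexivity. - symmetry. apply (pk_whLR HC). }
  transitivity (pk ((whR (lphi0 L') B \v eqc (eq_sym (comp1A (lF L') (rmS S) B)) \v whL (lF L') h)
      \v whR p (I \o1 A))).
  2:{ apply pk_vcong.
      - rewrite <- (pk_whLR HC), <- (pk_whRc HC). apply pk_whR. apply (pk_of HC _ _ _ _ (eq_sym Hjp)).
      - rewrite (pk_eqcr HC), (pk_eqcl HC). symmetry. apply (Phi _ HC _ _ _ _ _ _ _ _ HS HT _ HL'). }
  transitivity (pk (whR (whL (rmS T) p0) B \v (whR (lphi0 L) B \v eqc (eq_sym (comp1A (lF L) (rmS S) B)) \v whL (lF L) h))).
  { apply pk_vcong. - apply (Phi _ HC _ _ _ _ _ _ _ _ HS HT _ HL). - reflexivity. }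
  rewrite <- !(vA _ HC), <- (whR_v _ HC), <- Hph, (whR_v _ HC), !(vA _ HC).
  apply pk_vcong; [ | reflexivity].
  rewrite (pk_eqcl HC), <- (vA _ HC).
  transitivity (pk (whR p (rmS S \o1 B) \v whL (lF L) h)).
  { apply pk_vcong. - reflexivity. - rewrite (pk_eqcr HC). apply (pk_whRc HC). }
  rewrite (interchange _ HC). reflexivity.
Qed.

Theorem mainTheorem16' (L L' : Lifting X0 X Y0 Y I J S T)
    (HL : is_lifting L) (HL' : is_lifting L') :
  (forall p p0 tp, is_lifting_map L L' p p0 tp ->
     is_rel_monad_trans (lFI L) (lFI L') (lphi0 L) (lphi0 L') p p0)
  /\ (forall p p0, is_rel_monad_trans (lFI L) (lFI L') (lphi0 L) (lphi0 L') p p0 ->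
        is_lifting_map L L' p p0 (fun K N => whL (mdM N) p0))
  /\ (forall p p0 tp, is_lifting_map L L' p p0 tp ->
        tp = (fun K N => whL (mdM N) p0)).
Proof.
  split; [ | split].
  - intros p p0 tp [Hjp Htj Hth Htn Htm Hphi]. split; [exact Hjp | ].
    apply pk_inj. rewrite (lemA L L' p), (lemB L L' p0), (Hphi Y (id1 Y)), (Htj Y). reflexivity.
  - intros p p0 [Hjp Hph].
    assert (Hphi1 : lphi L' (id1 Y) \v whR (whL (id1 Y) p) (rmS S)
                    = whL (id1 Y \o1 rmS T) p0 \v lphi L (id1 Y)).
    { apply pk_inj. rewrite <- (lemA L L' p), <- (lemB L L' p0), Hph. reflexivity. }
    constructor.
    + exact Hjp.
    + reflexivity.
    + intros K N HN. exact (tphom L L' HL HL' p p0 Hjp Hph K N HN).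
    + intros K N N' g HN HN' Hg. symmetry. apply (interchange _ HC).
    + intros K K' H N HN. simpl. apply (whL_comp _ HC).
    + intros K M. simpl. apply pk_inj.
      transitivity (pk (whL M (lphi L' (id1 Y)) \v whL M (whR (whL (id1 Y) p) (rmS S)))).
      { apply pk_vcong.
        - rewrite <- (pk_whLR HC). apply pk_whR, pk_whL. symmetry. apply (pk_whL1 HC).
        - apply pk_lphiM. exact HL'. }
      rewrite <- (whL_v _ HC), Hphi1, (whL_v _ HC).
      apply pk_vcong.
      * symmetry. apply pk_lphiM. exact HL.
      * rewrite (pk_whLc HC). apply pk_whL. rewrite (pk_whLc HC). apply (pk_whL1 HC).
  - intros p p0 tp [Hjp Htj Hth Htn Htm Hphi].
    apply functional_extensionality_dep; intro K.
    apply functional_extensionality_dep; intro N. apply Htj.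
Qed.
End Main.

Theorem mainTheorem16 (C : PreTwoCat) (HC : is_two_cat C)
    (X0 X Y0 Y : ob C) (I : hom X0 X) (J : hom Y0 Y)
    (S : RelMonad X0 X I) (T : RelMonad Y0 Y J)
    (HS : is_rel_monad S) (HT : is_rel_monad T)
    (L L' : Lifting X0 X Y0 Y I J S T)
    (HL : is_lifting L) (HL' : is_lifting L') :
  (forall p p0 tp, is_lifting_map L L' p p0 tp ->
     is_rel_monad_trans (lFI L) (lFI L') (lphi0 L) (lphi0 L') p p0)
  /\ (forall p p0, is_rel_monad_trans (lFI L) (lFI L') (lphi0 L) (lphi0 L') p p0 ->
        is_lifting_map L L' p p0 (fun K N => whL (mdM N) p0))
  /\ (forall p p0 tp, is_lifting_map L L' p p0 tp ->
        tp = (fun K N => whL (mdM N) p0)).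
Proof. exact (mainTheorem16' C HC X0 X Y0 Y I J S T HS HT L L' HL HL'). Qed.
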